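(* Let $G$ be a finite group, $H\le G$ a subgroup, and $k$ a field such that the group algebra $kH$ is a separable $k$-algebra. Suppose there are elements $g'_1,\ldots,g'_r\in G$ such that $\mathrm{core}_H(G)=H^{g'_1}\cap\cdots\cap H^{g'_r}\cap H$. Then $d(Q^G_H)\le r+1$.
   Context: $H^g=g^{-1}Hg$, and $\mathrm{core}_H(G)=\bigcap_{g\in G}H^g$ is the largest normal subgroup of $G$ contained in $H$. $Q^G_H$ denotes the right $kG$-module $kG/(kH)^+kG\cong k[H\backslash G]$, the permutation module on the right cosets of $H$ in $G$, where $(kH)^+$ is the augmentation ideal of $kH$. Tensor products of $kG$-modules are over $k$ with diagonal action $(m\otimes n)g=mg\otimes ng$; $Q^{\otimes 0}=k$ the trivial module. Modules $X,Y$ are similar if each is isomorphic to a direct summand of a finite direct sum of copies of the other. The depth $d(Q)$ is the least integer $n\ge0$ such that $Q^{\otimes n}$ and $Q^{\otimes(n+1)}$ are similar $kG$-modules. *)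

(* Defs.v *)
From HB Require Import structures.
From mathcomp Require Import all_boot all_order all_algebra all_fingroup.
From mathcomp Require Import mxrepresentation mxtens.
Set Implicit Arguments. Unset Strict Implicit. Unset Printing Implicit Defensive.
Import GRing.Theory.
Local Open Scope ring_scope.
Local Open Scope group_scope.

Section Defs.
Variables (F : fieldType) (gT : finGroupType).

(* A (right) kG-module of k-dimension n is given, in matrix form, by
   X : gT -> 'M[F]_n, where g acts on row vectors v by v |-> v *m X g.   *)

(* The permutation module Q^G_H = k[H\G] on the right cosets of H in G:
   the basis vector of the coset Hy is sent by x to that of Hyx. *)
Definition coset_perm_mx (H G : {set gT}) (x : gT) : 'M[F]_#|rcosets H G| :=
  \matrix_(i, j)
    ((@enum_val _ (mem (rcosets H G)) i :* x
       == @enum_val _ (mem (rcosets H G)) j)%:R).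

(* Q^{(x) n}: n-th tensor power over k with diagonal action (Kronecker
   power of matrices; Q^{(x)0} is the trivial 1-dimensional module). *)
Definition tens_pow_mx n (X : gT -> 'M[F]_n) (m : nat) : gT -> 'M[F]_(n ^ m) :=
  fun x => ntensmx (X x) m.

Definition dsum_mx m n (X : gT -> 'M[F]_m) (Y : gT -> 'M[F]_n)
  : gT -> 'M[F]_(m + n) :=
  fun x => block_mx (X x) 0 0 (Y x).

Fixpoint dsumn_mx n (X : gT -> 'M[F]_n) (k : nat) : gT -> 'M[F]_(k * n) :=
  match k return gT -> 'M[F]_(k * n) with
  | 0 => fun _ => 0
  | k'.+1 => dsum_mx X (dsumn_mx X k')
  end.

Definition mod_iso (G : {set gT}) m n (X : gT -> 'M[F]_m) (Y : gT -> 'M[F]_n) :=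
  exists (f : 'M[F]_(m, n)) (f' : 'M[F]_(n, m)),
    [/\ f *m f' = (1%:M)%R, f' *m f = (1%:M)%R & forall x, x \in G -> X x *m f = f *m Y x].

Definition summand_of_sum (G : {set gT}) m n (X : gT -> 'M[F]_m) (Y : gT -> 'M[F]_n) :=
  exists (k q : nat) (W : gT -> 'M[F]_q),
    mx_repr G W /\ mod_iso G (dsum_mx X W) (dsumn_mx Y k).

Definition similar_mod (G : {set gT}) m n (X : gT -> 'M[F]_m) (Y : gT -> 'M[F]_n) :=
  summand_of_sum G X Y /\ summand_of_sum G Y X.

(* Depth d(Q) <= b: the least n with Q^{(x)n} ~ Q^{(x)(n+1)} is at most b. *)
Definition depth_le (G : {set gT}) n (Q : gT -> 'M[F]_n) (b : nat) :=
  exists m, (m <= b)%N /\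
    similar_mod G (tens_pow_mx Q m) (tens_pow_mx Q m.+1).

(* kH is a separable k-algebra: there is a separability idempotent
   e = \sum_{x,y in H} c(x,y) x (x) y in kH (x)_k kH^op, i.e. the
   multiplication kH (x) kH -> kH, a (x) b |-> ab, sends e to 1 and
   a e = e a for all a in kH (the bimodule structure being
   a (u (x) v) b = au (x) vb); by linearity it suffices to take a = h in H. *)
Definition group_alg_separable (H : {set gT}) :=
  exists c : {ffun gT * gT -> F},
    [/\ forall x y, c (x, y) != 0 -> (x \in H) && (y \in H),
        forall z, z \in H ->
          \sum_(p in setX H H | p.1 * p.2 == z) c p = ((z == 1%g)%:R)%R
      & forall h x y, h \in H -> c (h^-1 * x, y) = c (x, y * h^-1)].

End Defs.

(* Main.v *)
Require Import Defs.
From HB Require Import structures.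
From mathcomp Require Import all_boot all_order all_algebra all_fingroup.
From mathcomp Require Import mxrepresentation mxtens.
Set Implicit Arguments. Unset Strict Implicit. Unset Printing Implicit Defensive.
Import GRing.Theory.
Local Open Scope ring_scope.

Section Crit.
Variables (F : fieldType) (gT : finGroupType) (G : {group gT}).

Lemma complement_crit m N (X : gT -> 'M[F]_m) (Z : gT -> 'M[F]_N)
  (S : 'M[F]_(m, N)) (P : 'M[F]_(N, m)) :
  mx_repr G Z -> S *m P = 1%:M ->
  (forall g, g \in G -> X g *m S = S *m Z g) ->
  (forall g, g \in G -> Z g *m P = P *m X g) ->
  exists q (W : gT -> 'M[F]_q), mx_repr G W /\ mod_iso G (dsum_mx X W) Z.
Proof.
move=> [Z1 ZM] SP XS ZP.
set A := 1%:M - P *m S.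
have AA : A *m A = A.
  by rewrite /A mulmxBl mul1mx !mulmxBr mulmx1 -!mulmxA (mulmxA S P) SP mul1mx subrr subr0.
have ZA g : g \in G -> Z g *m A = A *m Z g.
  by move=> Gg; rewrite /A mulmxBr mulmxBl mulmx1 mul1mx mulmxA ZP // -mulmxA XS // mulmxA.
set R := row_base A.
set C := A *m pinvmx R.
have CR : C *m R = A by rewrite /C mulmxKpV // eq_row_base.
set D := R *m pinvmx A.
have DA : D *m A = R by rewrite /D mulmxKpV // eq_row_base.
have [Rr RRr] : exists Rr, R *m Rr = 1%:M := row_freeP (row_base_free A).
have DC : D *m C = 1%:M.
  by rewrite -[D *m C]mulmx1 -RRr mulmxA -(mulmxA D) CR DA.
clearbody D C R.
have RC : R *m C = 1%:M.
  have : D *m (C *m R) *m (C *m R) *m Rr = 1%:M by rewrite CR -(mulmxA D A A) AA DA RRr.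
  by rewrite !mulmxA DC mul1mx -(mulmxA (R *m C)) RRr mulmx1.
have SA : S *m A = 0.
  by rewrite /A mulmxBr mulmx1 mulmxA SP mul1mx subrr.
have AP : A *m P = 0.
  by rewrite /A mulmxBl mul1mx -mulmxA SP mulmx1 subrr.
have SC : S *m C = 0.
  by rewrite -[S *m C]mulmx1 -RC mulmxA -(mulmxA S) CR SA mul0mx.
have RP : R *m P = 0.
  by rewrite -[R *m P]mul1mx -RC -mulmxA (mulmxA C) CR AP mulmx0.
have RA : R *m A = R by rewrite -[A in R *m A]CR mulmxA RC mul1mx.
have AC : A *m C = C by rewrite -[A in A *m C]CR -mulmxA RC mulmx1.
exists (\rank A), (fun g => R *m Z g *m C); split.
  split; first by rewrite Z1 mulmx1 RC.
  move=> x y Gx Gy /=; rewrite ZM // -!mulmxA (mulmxA C) CR.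
  by rewrite (mulmxA A) -ZA // -mulmxA AC.
exists (col_mx S R), (row_mx P C); split.
- by rewrite mul_col_row SP SC RP RC -scalar_mx_block.
- by rewrite mul_row_col CR /A addrC subrK.
- move=> g Gg; rewrite /dsum_mx mul_block_col !mul0mx addr0 add0r mul_col_mx XS //.
  by rewrite -!mulmxA CR ZA // mulmxA RA.
Qed.

End Crit.
Section Crit2.
Variables (F : fieldType) (gT : finGroupType) (G : {group gT}).

Lemma dsum_repr m n (X : gT -> 'M[F]_m) (Y : gT -> 'M[F]_n) :
  mx_repr G X -> mx_repr G Y -> mx_repr G (dsum_mx X Y).
Proof.
move=> [X1 XM] [Y1 YM]; split; first by rewrite /dsum_mx X1 Y1 -scalar_mx_block.
move=> x y Gx Gy; rewrite /dsum_mx mulmx_block XM // YM //.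
by rewrite !mulmx0 !mul0mx !addr0 !add0r.
Qed.

Lemma dsumn_repr n (Y : gT -> 'M[F]_n) k :
  mx_repr G Y -> mx_repr G (dsumn_mx Y k).
Proof.
move=> rY; elim: k => [|k IH] /=.
  split; first by apply/matrixP=> [[]].
  by move=> x y _ _; apply/matrixP=> [[]].
exact: dsum_repr.
Qed.

Lemma fam_mats m n (X : gT -> 'M[F]_m) (Y : gT -> 'M[F]_n)
  (fam : seq ('M[F]_(m, n) * 'M[F]_(n, m))) :
  (forall sp, sp \in fam -> forall g, g \in G ->
     X g *m sp.1 = sp.1 *m Y g /\ Y g *m sp.2 = sp.2 *m X g) ->
  exists (S : 'M[F]_(m, size fam * n)) (P : 'M[F]_(size fam * n, m)),
    [/\ S *m P = \sum_(sp <- fam) sp.1 *m sp.2,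
        forall g, g \in G -> X g *m S = S *m dsumn_mx Y (size fam) g &
        forall g, g \in G -> dsumn_mx Y (size fam) g *m P = P *m X g].
Proof.
elim: fam => [|sp fam IH] Hf /=.
  exists 0, 0; split; first by rewrite big_nil mulmx0.
    by move=> g _; rewrite mulmx0 mul0mx.
  by move=> g _; rewrite mulmx0 mul0mx.
have [|S [P [SP XS YP]]] := IH.
  by move=> sp' Hsp'; apply: Hf; rewrite inE Hsp' orbT.
have H1 := Hf sp (mem_head _ _).
exists (row_mx sp.1 S), (col_mx sp.2 P); split.
- by rewrite mul_row_col SP big_cons.
- move=> g Gg; rewrite /dsum_mx mul_row_block mul_mx_row.
  by rewrite !mulmx0 addr0 add0r (proj1 (H1 g Gg)) XS.
- move=> g Gg; rewrite /dsum_mx mul_block_col mul_col_mx.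
  by rewrite !mul0mx addr0 add0r (proj2 (H1 g Gg)) YP.
Qed.

End Crit2.

Section Crit3.
Variables (F : fieldType) (gT : finGroupType) (G : {group gT}).

Lemma fam_crit m n (X : gT -> 'M[F]_m) (Y : gT -> 'M[F]_n)
  (fam : seq ('M[F]_(m, n) * 'M[F]_(n, m))) :
  mx_repr G Y ->
  (forall sp, sp \in fam -> forall g, g \in G ->
     X g *m sp.1 = sp.1 *m Y g /\ Y g *m sp.2 = sp.2 *m X g) ->
  \sum_(sp <- fam) sp.1 *m sp.2 = 1%:M ->
  summand_of_sum G X Y.
Proof.
move=> rY Hf Hs; have [S [P [SP XS YP]]] := fam_mats Hf.
have [q [W [rW iso]]] := complement_crit (dsumn_repr (size fam) rY) (etrans SP Hs) XS YP.
by exists (size fam), q, W.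
Qed.

Lemma repr_ext n (X Y : gT -> 'M[F]_n) :
  (forall g, g \in G -> X g = Y g) -> mx_repr G Y -> mx_repr G X.
Proof.
move=> E [Y1 YM]; split; first by rewrite E ?group1.
by move=> x y Gx Gy; rewrite !E ?groupM // YM.
Qed.

End Crit3.

Section Perm.
Variables (F : fieldType) (gT : finGroupType) (G : {group gT}).

Definition pmx d (a : 'I_d -> gT -> 'I_d) (g : gT) : 'M[F]_d :=
  \matrix_(i, j) (a i g == j)%:R.

Lemma pmx_mul d (a : 'I_d -> gT -> 'I_d) g p (M : 'M[F]_(d, p)) i j :
  (pmx a g *m M) i j = M (a i g) j.
Proof.
rewrite !mxE (bigD1 (a i g)) //= mxE eqxx mul1r big1 ?addr0 // => l /negbTE.
by rewrite mxE eq_sym => ->; rewrite mul0r.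
Qed.

Lemma in_stab d (a : action G 'I_d) z x :
  (x \in 'C_G[z | a])%g = (x \in G) && (a z x == z).
Proof. by rewrite !inE sub1set inE; case: (x \in G). Qed.

Lemma pmx_equiv d1 d2 (a : action G 'I_d1) (b : action G 'I_d2)
   (M : 'M[F]_(d1, d2)) g :
  g \in G -> (forall i j, M (a i g) (b j g) = M i j) ->
  pmx a g *m M = M *m pmx b g.
Proof.
move=> Gg HM; apply/matrixP=> i j; rewrite pmx_mul mxE.
rewrite (bigD1 (b j g^-1)%g) //= mxE actKVin // eqxx mulr1 big1 ?addr0.
  by rewrite -{1}[j](actKVin b Gg) HM.
move=> l Hl; rewrite mxE; case: eqP => [E|]; last by rewrite mulr0.
by case/eqP: Hl; rewrite -E actKin.
Qed.

Lemma pmx_repr d (a : action G 'I_d) : mx_repr G (pmx a).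
Proof.
split.
  by apply/matrixP=> i j; rewrite !mxE act1.
move=> x y Gx Gy; apply/matrixP=> i j; rewrite pmx_mul !mxE actMin //.
Qed.

Section Prod.
Variables (d1 d2 : nat) (a : action G 'I_d1) (b : action G 'I_d2).

Definition prod_act (k : 'I_(d1 * d2)) (g : gT) : 'I_(d1 * d2) :=
  mxtens_index (a (mxtens_unindex k).1 g, b (mxtens_unindex k).2 g).

Lemma prod_is_action : is_action G prod_act.
Proof.
split.
  move=> g k l /(can_inj (@mxtens_indexK d1 d2)) [] /act_inj E1 /act_inj E2.
  apply: (can_inj (@mxtens_unindexK d1 d2)).
  by apply: injective_projections; [exact: E1 | exact: E2].
move=> k x y Gx Gy; rewrite /prod_act mxtens_indexK /= !actMin //.
Qed.

Definition prodA := Action prod_is_action.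

Lemma prodA_index i j g :
  prodA (mxtens_index (i, j)) g = mxtens_index (a i g, b j g).
Proof. by rewrite /= /prod_act mxtens_indexK. Qed.

Lemma pmx_tens g : pmx a g *t pmx b g = pmx prodA g.
Proof.
apply/matrixP=> i j.
case: (mxtens_indexP i) => i1 i2; case: (mxtens_indexP j) => j1 j2.
rewrite tensmxE !mxE prodA_index (inj_eq (can_inj (@mxtens_indexK d1 d2))).
by rewrite xpair_eqE; case: (_ == _); case: (_ == _); rewrite ?mulr1 ?mulr0 ?mul0r.
Qed.

End Prod.

Section Coset.
Variable H : {group gT}.
Local Notation n := #|rcosets H G|.

Lemma HinR : (H : {set gT}) \in rcosets H G.
Proof. by apply/imsetP; exists 1%g; rewrite ?group1 // rcosetE rcoset1. Qed.

Lemma rc_in x : x \in G -> (H :* x)%g \in rcosets H G.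
Proof. by move=> Gx; apply/imsetP; exists x; rewrite ?rcosetE. Qed.

Lemma enum_val_rc (i : 'I_n) : exists2 x, x \in G & enum_val i = (H :* x)%g.
Proof. by have /imsetP[x Gx ->] := enum_valP i; exists x; rewrite ?rcosetE. Qed.

Definition cact_fun (i : 'I_n) (g : gT) : 'I_n :=
  if g \in G then enum_rank_in HinR (enum_val i :* g)%g else i.

Lemma cact_val i g : g \in G -> enum_val (cact_fun i g) = (enum_val i :* g)%g.
Proof.
move=> Gg; rewrite /cact_fun Gg enum_rankK_in //.
by have [x Gx ->] := enum_val_rc i; rewrite -rcosetM rc_in // groupM.
Qed.

Lemma cact_is_action : is_action G cact_fun.
Proof.
split.
  move=> g i j; rewrite /cact_fun; case Gg: (g \in G) => // E.
  apply: enum_val_inj; have := congr1 enum_val E.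
  rewrite !enum_rankK_in; last 2 first.
  - by have [x Gx ->] := enum_val_rc j; rewrite -rcosetM rc_in // groupM.
  - by have [x Gx ->] := enum_val_rc i; rewrite -rcosetM rc_in // groupM.
  move/(congr1 (fun A => A :* g^-1)%g).
  by rewrite -!rcosetM mulgV !rcoset1.
move=> i x y Gx Gy; apply: enum_val_inj.
by rewrite !cact_val ?groupM // rcosetM.
Qed.

Definition cact := Action cact_is_action.

Lemma coset_pmx g : g \in G -> coset_perm_mx F H G g = pmx cact g.
Proof.
move=> Gg; apply/matrixP=> i j; rewrite !mxE.
by rewrite -(inj_eq enum_val_inj) /= cact_val.
Qed.

Lemma rcoset_fix (y x : gT) : ((H :* y) :* x == H :* y)%g = (x \in H :^ y)%g.
Proof.
rewrite mem_conjg conjgE invgK -rcosetM.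
apply/eqP/idP => [E | Hx].
  have := rcoset_refl H (y * x)%g; rewrite E mem_rcoset.
  by rewrite -mulgA.
apply/rcoset_eqP; rewrite mem_rcoset.
by rewrite mulgA in Hx.
Qed.

Lemma cact_fix (i : 'I_n) x y : x \in G -> enum_val i = (H :* y)%g ->
  (cact i x == i) = (x \in H :^ y)%g.
Proof.
move=> Gx Ei; rewrite -(inj_eq enum_val_inj) /= cact_val // Ei.
exact: rcoset_fix.
Qed.

Fixpoint tact k : action G 'I_(n ^ k.+1) :=
  match k return action G 'I_(n ^ k.+1) with
  | 0 => cact
  | k'.+1 => @prodA n (n ^ k'.+1) cact (tact k')
  end.

Lemma tens_pmx k g : g \in G ->
  tens_pow_mx (coset_perm_mx F H G) k.+1 g = pmx (tact k) g.
Proof.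
move=> Gg; rewrite /tens_pow_mx /ntensmx.
elim: k => [|k IH] /=; first exact: coset_pmx.
by rewrite IH coset_pmx // pmx_tens.
Qed.

End Coset.

Lemma card_cond (P : pred gT) :
  \sum_(h in G) (P h : nat) = #|[set h in G | P h]|%N.
Proof.
rewrite -sum1dep_card big_mkcondr /=; apply: eq_bigr => h _.
by case: (P h).
Qed.

Definition Kmx d1 d2 (a' : action G 'I_d1) (b' : action G 'I_d2) u v : 'M[F]_(d1, d2) :=
  \sum_(g in G) delta_mx (a' u g) (b' v g).

Section Kmx.
Variables (d1 d2 : nat) (a : action G 'I_d1) (b : action G 'I_d2).

Lemma Kmx_inv u v h : h \in G ->
  forall y x, Kmx a b u v (a y h) (b x h) = Kmx a b u v y x.
Proof.
move=> Gh y x; rewrite !summxE (reindex_inj (mulIg h)) /=.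
apply: eq_big => [g|g]; first by rewrite groupMr.
rewrite groupMr // => Gg.
rewrite !mxE !actMin // ?(groupMr _ Gh) //.
by rewrite !(inj_eq (act_inj _ h)).
Qed.

Lemma Kmx_inv' u v h : h \in G ->
  forall x y, Kmx b a v u (b x h) (a y h) = Kmx b a v u x y.
Proof.
move=> Gh x y; rewrite !summxE (reindex_inj (mulIg h)) /=.
apply: eq_big => [g|g]; first by rewrite groupMr.
rewrite groupMr // => Gg.
rewrite !mxE !actMin // ?(groupMr _ Gh) //.
by rewrite !(inj_eq (act_inj _ h)).
Qed.

Lemma KK u v : (forall x, x \in G -> b v x = v -> a u x = u) ->
  Kmx a b u v *m Kmx b a v u =
  (\sum_(g in G) delta_mx (a u g) (a u g)) *+ #|('C_G[v | b])%g|.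
Proof.
move=> Hst; rewrite mulmx_suml -sumrMnl; apply: eq_bigr => g Gg.
rewrite mulmx_sumr.
rewrite (eq_bigr (fun h => delta_mx (a u g) (a u g) *+ (b v h == b v g))); last first.
  move=> h Gh; rewrite mul_delta_mx_cond eq_sym.
  case: eqP => [E|]; last by rewrite !mulr0n.
  suff -> : a u h = a u g by [].
  have Gg' : (g^-1)%g \in G by rewrite groupV.
  have E' : b v (h * g^-1)%g = v by rewrite actMin // E -actMin ?mulgV ?act1.
  have := Hst _ (groupM Gh Gg') E'.
  by move=> E2; rewrite -{2}E2 -actMin // ?groupM // mulgKV.
rewrite sumrMnr card_cond.
have -> : [set h in G | b v h == b v g] = amove b G v (b v g) by [].
by rewrite amove_act // card_rcoset.
Qed.

End Kmx.

Section Reps.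
Variables (d : nat) (a : action G 'I_d).

Definition rep z := odflt z [pick w in orbit a G z].
Definition isrep z := rep z == z.

Lemma rep_in z : rep z \in orbit a G z.
Proof.
rewrite /rep; case: pickP => [w Hw | H0] //=.
by have := H0 z; rewrite orbit_refl.
Qed.

Lemma rep_eq z y : orbit a G z = orbit a G y -> rep z = rep y.
Proof.
move=> E; rewrite /rep E; case: pickP => [w Hw | H0] //=.
by have := H0 y; rewrite orbit_refl.
Qed.

Lemma isrep_rep y : isrep (rep y).
Proof. by apply/eqP/rep_eq/(orbit_in_eqP (subxx _)); apply: rep_in. Qed.

Lemma isrep_uniq z y : isrep z -> y \in orbit a G z -> z = rep y.
Proof.
move=> /eqP Rz Hy; rewrite -Rz; apply: rep_eq.
by apply/esym/(orbit_in_eqP (subxx _)).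
Qed.

End Reps.

Section Dir2.
Variables (d d' : nat) (a : action G 'I_d) (b : action G 'I_d') (x0 : 'I_d').
Hypothesis Hst : forall z x, x \in G -> b x0 x = x0 -> a z x = z.
Hypothesis Hnz : forall z, (#|('C_G[x0 | b])%g| * #|('C_G[z | a])%g|)%:R != 0 :> F.

Definition wz z : F := (#|('C_G[x0 | b])%g| * #|('C_G[z | a])%g|)%:R^-1.

Definition fam2 := [seq (wz z *: Kmx a b z x0, Kmx b a x0 z) | z <- enum (isrep a)].

Lemma fam2_sum : \sum_(sp <- fam2) sp.1 *m sp.2 = 1%:M.
Proof.
rewrite big_map big_enum /=.
rewrite (eq_bigr (fun z => wz z *: ((\sum_(g in G) delta_mx (a z g) (a z g))
      *+ #|('C_G[x0 | b])%g|))); last first.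
  by move=> z _; rewrite -scalemxAl KK // => x Gx; apply: Hst.
apply/matrixP => y y'; rewrite summxE !mxE.
under eq_bigr => z _ do rewrite !mxE mulmxnE summxE.
case: (eqVneq y y') => [<- | neq]; last first.
  rewrite big1 // => z _; rewrite big1 ?mul0rn ?mulr0 // => g _.
  rewrite mxE; case: eqP => [E|] //=; case: eqP => [E2|] //=.
  by case/eqP: neq; rewrite E E2.
rewrite (bigD1 (rep a y)) ?isrep_rep //=.
rewrite [X in _ + X]big1 ?addr0; last first.
  move=> z /andP[Rz nz]; rewrite big1 ?mul0rn ?mulr0 // => g Gg.
  rewrite mxE andbb; case: eqP => [E|] //=.
  case/eqP: nz; apply: isrep_uniq => //; apply/orbitP; exists g => //.
have := rep_in a y; rewrite orbit_in_sym // => /orbitP[g Gg Eg].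
under eq_bigr => h _ do rewrite mxE andbb eq_sym.
rewrite -natr_sum card_cond.
have -> : [set h in G | a (rep a y) h == y] = amove a G (rep a y) y by [].
rewrite -[X in amove _ _ _ X]Eg amove_act // card_rcoset /wz.
  have -> : forall (u v : nat), (v%:R *+ u) = (u * v)%:R :> F by move=> u v; rewrite natrM mulr_natl.
  by rewrite mulVf.
exact: isrep_rep.
Qed.

End Dir2.

Definition funmx d1 d2 (f : 'I_d1 -> 'I_d2) : 'M[F]_(d1, d2) :=
  \matrix_(i, j) (f i == j)%:R.

Lemma funmx_tr d1 d2 (f : 'I_d1 -> 'I_d2) : injective f ->
  funmx f *m (funmx f)^T = 1%:M.
Proof.
move=> fI; apply/matrixP=> i j; rewrite !mxE (bigD1 (f i)) //= !mxE eqxx mul1r.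
rewrite big1 ?addr0; first by rewrite (inj_eq fI) eq_sym.
by move=> l /negbTE nl; rewrite !mxE eq_sym nl mul0r.
Qed.

Lemma funmx_equiv d1 d2 (a : action G 'I_d1) (b : action G 'I_d2)
  (f : 'I_d1 -> 'I_d2) :
  (forall g i, g \in G -> f (a i g) = b (f i) g) ->
  forall g, g \in G ->
  pmx a g *m funmx f = funmx f *m pmx b g /\
  pmx b g *m (funmx f)^T = (funmx f)^T *m pmx a g.
Proof.
move=> Hf g Gg; split; apply: pmx_equiv => // i j; rewrite !mxE Hf //.
  by rewrite (inj_eq (act_inj _ _)).
by rewrite (inj_eq (act_inj _ _)).
Qed.

Section Coset2.
Variable H : {group gT}.
Local Notation n := #|rcosets H G|.

Fixpoint hd k : 'I_(n ^ k.+1) -> 'I_n :=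
  match k return 'I_(n ^ k.+1) -> 'I_n with
  | 0 => id
  | k'.+1 => fun i => (@mxtens_unindex n (n ^ k'.+1) i).1
  end.
Arguments hd : clear implicits.

Lemma tactS_index k c j g :
  tact H k.+1 (@mxtens_index n (n ^ k.+1) (c, j)) g =
  @mxtens_index n (n ^ k.+1) (cact H c g, tact H k j g).
Proof. by rewrite /= /prod_act mxtens_indexK. Qed.

Lemma hd_act k i g : hd k (tact H k i g) = cact H (hd k i) g.
Proof.
case: k i => [|k] i //.
rewrite -[i](@mxtens_unindexK n (n ^ k.+1)) tactS_index.
by rewrite /hd !mxtens_indexK.
Qed.

Definition fdup k (i : 'I_(n ^ k.+1)) : 'I_(n ^ k.+2) :=
  @mxtens_index n (n ^ k.+1) (hd k i, i).
Arguments fdup : clear implicits.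

Lemma fdup_inj k : injective (fdup k).
Proof.
by move=> i j /(can_inj (@mxtens_indexK n (n ^ k.+1))) [].
Qed.

Lemma fdup_act k g i : g \in G -> fdup k (tact H k i g) = tact H k.+1 (fdup k i) g.
Proof. by move=> _; rewrite /fdup tactS_index hd_act. Qed.

Lemma stab_tuple k z x : x \in G -> (forall c, cact H c x = c) -> tact H k z x = z.
Proof.
move=> Gx Hc; elim: k z => [|k IH] z; first exact: Hc.
rewrite -[z](@mxtens_unindexK n (n ^ k.+1)).
by rewrite tactS_index Hc IH.
Qed.

Fixpoint build k (f : nat -> 'I_n) : 'I_(n ^ k.+1) :=
  match k return 'I_(n ^ k.+1) with
  | 0 => f 0%N
  | k'.+1 => @mxtens_index n (n ^ k'.+1) (f k, build k' f)
  end.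
Arguments build : clear implicits.

Lemma build_stab k f x : x \in G -> tact H k (build k f) x = build k f ->
  forall i, (i <= k)%N -> cact H (f i) x = f i.
Proof.
move=> Gx; elim: k => [|k IH].
  by move=> E i; rewrite leqn0 => /eqP ->.
rewrite [build _ _]/= tactS_index => /(can_inj (@mxtens_indexK n (n ^ k.+1))) [E1 E2].
move=> i; rewrite leq_eqVlt => /orP[/eqP -> //| ]; rewrite ltnS; exact: IH.
Qed.

Lemma stab_sub_conj k z : exists y, forall x, x \in ('C_G[z | tact H k])%g ->
  x \in (H :^ y)%g.
Proof.
have [y Gy Ey] := enum_val_rc (hd k z).
exists y => x; rewrite in_stab => /andP[Gx /eqP E].
by rewrite -(cact_fix Gx Ey) -hd_act E.
Qed.

End Coset2.
End Perm.
Lemma sep_card (F : fieldType) (gT : finGroupType) (H : {group gT}) :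
  group_alg_separable F H -> (#|H|%:R : F) != 0.
Proof.
case=> c [Csupp Csum Cinv].
have := Csum 1%g (group1 H); rewrite eqxx /=.
set S := [set (h^-1, h) | h in H]%g.
rewrite (eq_bigl (fun p => p \in S)); last first.
  move=> [x y] /=; rewrite !inE /=.
  apply/idP/imsetP => [/andP[/andP[Hx Hy] /eqP E] | [h Hh [-> ->]]].
    exists y => //; congr (_, _).
    by rewrite -(mulgK y x) E mul1g.
  by rewrite groupV Hh mulVg eqxx.
rewrite (eq_bigr (fun _ => c (1, 1)%g)); last first.
  move=> _ /imsetP[h Hh ->].
  by have := Cinv h 1%g h Hh; rewrite mulg1 mulgV.
rewrite sumr_const card_imset; last by move=> x y [].
move=> E; apply/eqP => E0; move: E; rewrite -[c _ *+ _]mulr_natr.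
rewrite [_%:R]E0 mulr0.
by move/eqP; rewrite eq_sym oner_eq0.
Qed.

Lemma dvd_nz (F : fieldType) d m : (d %| m)%N -> (m%:R : F) != 0 -> (d%:R : F) != 0.
Proof.
case/dvdnP=> k ->; rewrite natrM; apply: contra => /eqP ->.
by rewrite mulr0.
Qed.

Local Close Scope ring_scope.
Local Open Scope group_scope.

Theorem mainTheorem7 (F : fieldType) (gT : finGroupType) (G H : {group gT})
    (r : nat) (g' : 'I_r -> gT) :
  H \subset G ->
  group_alg_separable F H ->
  (forall i, g' i \in G) ->
  \bigcap_(g in G) H :^ g = (\bigcap_(i < r) H :^ g' i) :&: H ->
  depth_le G (coset_perm_mx F H G) r.+1.
Proof.
move=> sHG sep Gg' Hcore.
have Hn : ((#|H|%:R)%R : F) != 0%R := sep_card sep.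
pose n := #|rcosets H G|.
pose ci (y : gT) : 'I_n := enum_rank_in (HinR G H) (H :* y).
have ciE y : y \in G -> enum_val (ci y) = H :* y.
  by move=> Gy; rewrite /ci enum_rankK_in // rc_in.
pose gg (i : nat) : gT := oapp g' 1 (insub i).
have Ggg i : gg i \in G by rewrite /gg; case: insubP => [j _ _|_] //=.
pose x0 := build r (fun i => ci (gg i)).
have Hfix c x : x \in G -> x \in \bigcap_(g in G) H :^ g -> cact G H c x = c.
  move=> Gx /bigcapP Hx; have [y Gy Ey] := enum_val_rc c.
  by apply/eqP; rewrite (cact_fix Gx Ey); apply: Hx.
have Hst z x : x \in G -> tact G H r x0 x = x0 -> tact G H r.+1 z x = z.
  move=> Gx Ex; apply: stab_tuple => // c; apply: Hfix => //.
  have Bs := build_stab Gx Ex.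
  rewrite Hcore; apply/setIP; split.
    apply/bigcapP => i _.
    have /eqP := Bs i (ltnW (ltn_ord i)).
    rewrite (cact_fix Gx (ciE _ (Ggg i))) /gg.
    case: insubP => [j _ Ej | ]; last by rewrite ltn_ord.
    by rewrite (_ : j = i) //; apply: val_inj.
  have /eqP := Bs r (leqnn r).
  rewrite (cact_fix Gx (ciE _ (Ggg r))) /gg insubF ?ltnn //= conjsg1.
  by [].
have Hnz z : (((#|('C_G[x0 | tact G H r])| * #|('C_G[z | tact G H r.+1])|)%N)%:R : F)%R != 0%R.
  rewrite natrM mulf_neq0 //.
    have [y Hy] := stab_sub_conj x0; apply: dvd_nz Hn; rewrite -(cardJg H y).
    by apply: (cardSg (G := (H :^ y)%G) (H := ('C_G[x0 | tact G H r])%G)); apply/subsetP.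
  have [y Hy] := stab_sub_conj z; apply: dvd_nz Hn; rewrite -(cardJg H y).
  by apply: (cardSg (G := (H :^ y)%G) (H := ('C_G[z | tact G H r.+1])%G)); apply/subsetP.
exists r.+1; split => //.
have rX := repr_ext (tens_pmx F H r) (pmx_repr F (tact G H r)).
have rY := repr_ext (tens_pmx F H r.+1) (pmx_repr F (tact G H r.+1)).
split.
- apply: (fam_crit (fam := [:: (funmx F (@fdup gT G H r), (funmx F (@fdup gT G H r))^T)%R])) => //.
    move=> sp; rewrite inE => /eqP -> g Gg /=; rewrite !tens_pmx //.
    by apply: funmx_equiv => // g1 i Gg1; apply: fdup_act.
  by rewrite big_seq1 funmx_tr //; apply: fdup_inj.
- apply: (fam_crit (fam := fam2 F (tact G H r.+1) (tact G H r) x0)) => //.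
    move=> sp /mapP[z _ ->] g Gg /=; rewrite !tens_pmx //.
    split; apply: pmx_equiv => // i j; rewrite ?mxE.
      by rewrite Kmx_inv.
    by rewrite Kmx_inv'.
  exact: fam2_sum Hst Hnz.
Qed.
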